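(* Let $x\ge0$. Then for all $\alpha,\lambda\in[0,1]$, \[ 0\le\log\frac{1+\lambda x+(1+\sqrt{1-\alpha}\,x)^\lambda-(1+\lambda\sqrt{1-\alpha}\,x)}{(1+x)^\lambda}\le\alpha\frac{\lambda(1-\lambda)}{2}x^2 . \] *)

(* Defs.v *)
From Stdlib Require Import Reals.

(* Main.v *)
Require Import Defs.
From Stdlib Require Import Reals Lra.
Open Scope R_scope.

Lemma dP lam c : 0 <= c ->
  derivable_pt_lim (fun t => Rpower (1+t) lam) c (lam * Rpower (1+c) (lam-1) * 1).
Proof.
  intro Hc.
  apply (derivable_pt_lim_comp (fun t => 1 + t) (fun u => Rpower u lam)).
  - change (derivable_pt_lim ((fct_cte 1) + id)%F c 1).
    replace 1 with (0 + 1) at 2 by ring.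
    apply derivable_pt_lim_plus; [apply derivable_pt_lim_const| apply derivable_pt_lim_id].
  - apply derivable_pt_lim_power; lra.
Qed.

Lemma dlin a c : derivable_pt_lim (fun t => a * t) c (a * 1).
Proof. apply (derivable_pt_lim_scal id a c 1), derivable_pt_lim_id. Qed.

Lemma dsq a c : derivable_pt_lim (fun t => a * t^2) c (a * (2 * c)).
Proof.
  apply (derivable_pt_lim_scal (fun t => t^2) a c).
  replace (2*c) with (INR 2 * c^(Nat.pred 2)) by (simpl; ring).
  apply derivable_pt_lim_pow.
Qed.

Lemma Ple1 lam c : lam <= 1 -> 0 <= c -> Rpower (1+c) (lam-1) <= 1.
Proof.
  intros Hl Hc. unfold Rpower. apply Rle_trans with (exp 0); [|rewrite exp_0; lra].
  assert (0 <= ln (1+c)).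
  { destruct (Req_dec c 0) as [->|Hn]. rewrite Rplus_0_r, ln_1; lra.
    rewrite <- ln_1; left; apply ln_increasing; lra. }
  destruct (Req_dec ((lam - 1) * ln (1 + c)) 0) as [E|E]. rewrite E; lra.
  left; apply exp_increasing. nra.
Qed.

Lemma lnle z : 0 < z -> ln z <= z - 1.
Proof. intro H. pose proof (exp_ineq1_le (ln z)). rewrite exp_ln in H0; lra. Qed.

Lemma Pge lam c : 0 <= lam <= 1 -> 0 <= c -> 1 - (1-lam)*c <= Rpower (1+c) (lam-1).
Proof.
  intros Hl Hc. unfold Rpower.
  pose proof (exp_ineq1_le ((lam - 1) * ln (1 + c))).
  pose proof (lnle (1+c) ltac:(lra)).
  assert (0 <= ln (1+c)).
  { destruct (Req_dec c 0) as [->|Hn]. rewrite Rplus_0_r, ln_1; lra.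
    rewrite <- ln_1; left; apply ln_increasing; lra. }
  nra.
Qed.

Lemma key lam y x : 0 <= lam <= 1 -> 0 <= y <= x ->
  0 <= lam*(x-y) - (Rpower (1+x) lam - Rpower (1+y) lam) <= lam*(1-lam)/2*(x^2-y^2).
Proof.
  intros Hl Hy.
  destruct (Req_dec y x) as [->|Hne]. split; ring_simplify; lra.
  assert (Hlt : y < x) by lra.
  split.
  - destruct (MVT_cor2 (fun t => lam * t - Rpower (1+t) lam)
       (fun c => lam * 1 - lam * Rpower (1+c) (lam-1) * 1) y x Hlt) as [c [Hc1 Hc2]].
    { intros c Hc. apply (derivable_pt_lim_minus (fun t => lam*t) (fun t => Rpower (1+t) lam)).
      apply dlin. apply dP; lra. }
    pose proof (Ple1 lam c ltac:(lra) ltac:(lra)).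
    assert (0 <= lam * 1 - lam * Rpower (1 + c) (lam - 1) * 1) by nra.
    nra.
  - destruct (MVT_cor2 (fun t => lam*(1-lam)/2 * t^2 - lam * t + Rpower (1+t) lam)
       (fun c => lam*(1-lam)/2 * (2*c) - lam * 1 + lam * Rpower (1+c) (lam-1) * 1) y x Hlt) as [c [Hc1 Hc2]].
    { intros c Hc.
      apply (derivable_pt_lim_plus (fun t => lam*(1-lam)/2 * t^2 - lam * t) (fun t => Rpower (1+t) lam)).
      apply (derivable_pt_lim_minus (fun t => lam*(1-lam)/2 * t^2) (fun t => lam * t)).
      apply dsq. apply dlin. apply dP; lra. }
    pose proof (Pge lam c ltac:(lra) ltac:(lra)).
    assert (0 <= lam*(1-lam)/2 * (2*c) - lam * 1 + lam * Rpower (1+c) (lam-1) * 1) by nra.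
    simpl in Hc1. simpl. nra.
Qed.

Theorem lemma2p6 (x : R) (hx : 0 <= x) (alpha lambda : R)
  (ha : 0 <= alpha <= 1) (hl : 0 <= lambda <= 1) :
  0 <= ln ((1 + lambda * x + Rpower (1 + sqrt (1 - alpha) * x) lambda
            - (1 + lambda * sqrt (1 - alpha) * x)) / Rpower (1 + x) lambda)
  /\
  ln ((1 + lambda * x + Rpower (1 + sqrt (1 - alpha) * x) lambda
            - (1 + lambda * sqrt (1 - alpha) * x)) / Rpower (1 + x) lambda)
  <= alpha * (lambda * (1 - lambda) / 2) * x ^ 2.
Proof.
  set (s := sqrt (1 - alpha)).
  assert (Hs2 : s * s = 1 - alpha) by (apply sqrt_sqrt; lra).
  assert (Hs0 : 0 <= s) by apply sqrt_pos.
  assert (Hs1 : s <= 1) by nra.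
  set (y := s * x).
  assert (Hy : 0 <= y <= x) by (unfold y; split; nra).
  pose proof (key lambda y x hl Hy) as [K0 K1].
  set (D := Rpower (1 + x) lambda) in *.
  set (P := Rpower (1 + y) lambda) in *.
  assert (HD : 1 <= D).
  { unfold D, Rpower. pose proof (exp_ineq1_le (lambda * ln (1 + x))).
    assert (0 <= ln (1+x)).
    { destruct (Req_dec x 0) as [->|Hn]. rewrite Rplus_0_r, ln_1; lra.
      rewrite <- ln_1; left; apply ln_increasing; lra. }
    nra. }
  set (K := lambda * (x - y) - (D - P)) in *.
  replace (1 + lambda * x + P - (1 + lambda * s * x)) with (D + K)
    by (unfold K, y; ring).
  replace ((D + K) / D) with (1 + K / D) by (field; lra).
  assert (HKD : 0 <= K / D) by (unfold Rdiv; apply Rmult_le_pos; [lra| left; apply Rinv_0_lt_compat; lra]).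
  assert (HKD2 : K / D <= K).
  { unfold Rdiv. rewrite <- (Rmult_1_r K) at 2. apply Rmult_le_compat_l; [lra|].
    rewrite <- Rinv_1. apply Rinv_le_contravar; lra. }
  split.
  - destruct (Req_dec (K/D) 0) as [E|E].
    + rewrite E, Rplus_0_r, ln_1; lra.
    + rewrite <- ln_1; left; apply ln_increasing; lra.
  - pose proof (lnle (1 + K/D) ltac:(lra)).
    assert (alpha * x^2 = x^2 - y^2) by (unfold y; simpl; nra).
    nra.
Qed.
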